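(* Let $A$ be a setoid, $B$ a setoid family over $A$ and $(C,a_C)$ a $P_B$-algebra. For every $w:W$ there are an extensional function $\mathsf{recImS}\,w:\mathsf{ImS}\,w\Rightarrow C$ and a term $\mathsf{recImSpf}\,w:\mathsf{RecDef}\,w\,(\mathsf{recImS}\,w)$.
   Context: Setting: intensional Martin-Löf type theory with $\Pi$-types, record types and a universe $\mathsf U$ closed under $\Pi$ and containing intensional $\Sigma$-types, identity types, unit type, W-types and dependent W-types; propositions-as-types. For a W-type with constructor $\mathsf{sup}$, $\mathsf n,\mathsf b$ are node and branch functions. $\mathsf{DW}_{I,X,Y,d}:I\to\mathsf U$ denotes the dependent W-type: the inductive family with constructor $\mathsf{dsup}\,i\,x\,f:\mathsf{DW}\,i$ for $x:X\,i$ and $f:\prod_{y:Y\,i\,x}\mathsf{DW}(d\,i\,x\,y)$, and the usual dependent eliminator. A setoid $X$: type $X_0:\mathsf U$ with relation $\approx_X$ and proofs of reflexivity, symmetry, transitivity; $x:X$ means $x:X_0$. Extensional function $f:X\Rightarrow Y$: $f_0:X_0\to Y_0$ with a proof that it preserves $\approx$; $X\Rightarrow Y$ is a setoid with pointwise equality; $\circ$ is composition. A setoid family $B$ over setoid $A$: setoids $B\,a$ and transports $B_\alpha:B\,a\Rightarrow B\,a'$ for $\alpha:a\approx_Aa'$, functorial up to $\approx$, with $B_\alpha\approx B_{\alpha'}$ for all $\alpha,\alpha'$. Write $b\approx_\alpha b'$ for $B_\alpha b\approx b'$. $P_BX$: setoid with underlying type $\sum_{a:A}(B\,a\Rightarrow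 X)$ and $(a,k)\approx(a',k'):=\sum_{\alpha:a\approx a'}k\approx k'\circ B_\alpha$. A $P_B$-algebra is a setoid $C$ with extensional $a_C:P_BC\Rightarrow C$. $W$: with $A_0,B_0$ underlying types and $\mathsf W:=\mathsf W(A_0,B_0)$, $\approx^Bw\,w':=\mathsf{DW}_{I,X,Y,d}(w,w')$ with $I:=\mathsf W\times\mathsf W$, $X(w,w'):=\mathsf nw\approx_A\mathsf nw'$, $Y(w,w')\alpha:=\sum_{b,b'}b\approx_\alpha b'$, $d(w,w')\alpha(b,b',\beta):=(\mathsf bwb,\mathsf bw'b')$. $W$: underlying type $\sum_{w:\mathsf W}\approx^Bw\,w$, $(w,\_)\approx_W(w',\_):=\approx^Bw\,w'$. $\mathsf n$, $\mathsf b$ induce extensional $\mathsf n:W\Rightarrow A$ and $\mathsf b\,w:B(\mathsf nw)\Rightarrow W$; for $\gamma:w\approx_Ww'$, $\mathsf n^\ast\gamma:\mathsf nw\approx_A\mathsf nw'$ denotes extensionality of $\mathsf n$ applied to $\gamma$. $\mathsf{ImS}\,w$ (for $w:W$): setoid with underlying type $B_0(\mathsf nw)$ and $b\approx b':=\mathsf bwb\approx_W\mathsf bwb'$; transport $\mathsf{ImS}_\gamma s:=B_{\mathsf n^\ast\gamma}s$. $e_w:B(\mathsf nw)\Rightarrow\mathsf{ImS}\,w$ has identity underlying function. A family $F:\prod_{s:\mathsf{ImS}w}\mathsf{ImS}(\mathsf bws)\Rightarrow C$ is coherent if $F\,s\approx(F\,s')\circ\mathsf{ImS}_\sigma$ for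 all $\sigma:s\approx s'$ in $\mathsf{ImS}\,w$; $\mathsf{CohMaps}\,w$ is the setoid of coherent families with pointwise equality. For $F:\mathsf{CohMaps}\,w$, $\mathsf{recst}\,w\,F:\mathsf{ImS}\,w\Rightarrow C$ is the extensional function $s\mapsto a_C(\mathsf n(\mathsf bws),(F\,s)\circ e_{\mathsf bws})$. For $k:\mathsf{ImS}\,w\Rightarrow C$, $\mathsf{RecDef}\,w\,k:=\mathsf{DW}_{I',X',Y',d'}(w,k)$ with $I':=\sum_{w:W}(\mathsf{ImS}w\Rightarrow C)$, $X'(w,k):=\sum_{F:\mathsf{CohMaps}w}k\approx\mathsf{recst}\,w\,F$, $Y'(w,k)(F,\_):=$ underlying type of $\mathsf{ImS}\,w$, $d'(w,k)(F,\_)s:=(\mathsf bws,F\,s)$. *)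

(* Defs.v *)
(* plain intensional type theory; propositions-as-types.
   The universe U of the paper is modelled by Rocq's Type. *)



Record Setoid := mkSetoid {
  car :> Type;
  eqv : car -> car -> Type;
  srefl : forall x, eqv x x;
  ssym : forall x y, eqv x y -> eqv y x;
  strans : forall x y z, eqv x y -> eqv y z -> eqv x z }.
Arguments eqv {s} x y.
Arguments srefl {s} x.
Arguments ssym {s x y} _.
Arguments strans {s x y z} _ _.

Record ExtFun (X Y : Setoid) := mkExtFun {
  ap :> X -> Y;
  ext : forall x x', eqv x x' -> eqv (ap x) (ap x') }.
Arguments ext {X Y} _ {x x'} _.
Arguments mkExtFun {X Y} ap ext.

Definition FunEqv {X Y : Setoid} (f g : ExtFun X Y) : Type :=
  forall x, eqv (f x) (g x).

Definition FunSetoid (X Y : Setoid) : Setoid.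
Proof.
  refine (@mkSetoid (ExtFun X Y) (@FunEqv X Y) _ _ _).
  - intros f x; apply srefl.
  - intros f g H x; apply ssym, H.
  - intros f g h H1 H2 x; exact (strans (H1 x) (H2 x)).
Defined.

Definition comp {X Y Z : Setoid} (g : ExtFun Y Z) (f : ExtFun X Y) : ExtFun X Z :=
  mkExtFun (fun x => g (f x)) (fun x x' e => ext g (ext f e)).

Record SetoidFamily (A : Setoid) := mkSetoidFamily {
  fam : A -> Setoid;
  tr : forall a a' : A, eqv a a' -> ExtFun (fam a) (fam a');
  tr_refl : forall (a : A) (b : fam a), eqv (tr a a (srefl a) b) b;
  tr_trans : forall (a a' a'' : A) (al : eqv a a') (be : eqv a' a'') (b : fam a),
      eqv (tr a a'' (strans al be) b) (tr a' a'' be (tr a a' al b));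
  tr_irr : forall (a a' : A) (al al' : eqv a a') (b : fam a),
      eqv (tr a a' al b) (tr a a' al' b) }.
Arguments fam {A} _ _.
Arguments tr {A} _ {a a'} _.

Definition treqv {A : Setoid} (B : SetoidFamily A) {a a' : A} (al : eqv a a')
  (b : fam B a) (b' : fam B a') : Type := eqv (tr B al b) b'.

Lemma tr_inv {A : Setoid} (B : SetoidFamily A) {a a' : A} (al : eqv a a') (b' : fam B a') :
  eqv (tr B al (tr B (ssym al) b')) b'.
Proof.
  eapply strans; [apply ssym, tr_trans|].
  eapply strans; [apply tr_irr with (al' := srefl a')|].
  apply tr_refl.
Qed.

Definition PB {A : Setoid} (B : SetoidFamily A) (X : Setoid) : Setoid.
Proof.
  refine (@mkSetoid {a : A & ExtFun (fam B a) X}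
            (fun p q => {al : eqv (projT1 p) (projT1 q) &
                           FunEqv (projT2 p) (comp (projT2 q) (tr B al))}) _ _ _).
  - intros [a k]; exists (srefl a); intro b; simpl.
    apply (ext k), ssym, tr_refl.
  - intros [a k] [a' k'] [al H]; simpl in *.
    exists (ssym al); intro b'; simpl.
    eapply strans; [| apply ssym, H]; simpl.
    apply (ext k'), ssym, tr_inv.
  - intros [a k] [a' k'] [a'' k''] [al H1] [be H2]; simpl in *.
    exists (strans al be); intro b; simpl.
    eapply strans; [apply H1|]; simpl.
    eapply strans; [apply H2|]; simpl.
    apply (ext k''), ssym, tr_trans.
Defined.

(** A P_B-algebra is a setoid C with a_C : P_B C => C; we keep it as two binders. *)

Inductive Wty (A0 : Type) (B0 : A0 -> Type) : Type :=
  sup : forall a : A0, (B0 a -> Wty A0 B0) -> Wty A0 B0.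
Arguments sup {A0 B0} a f.

Definition wnode {A0 B0} (w : @Wty A0 B0) : A0 := match w with sup a _ => a end.
Definition wbranch {A0 B0} (w : @Wty A0 B0) : B0 (wnode w) -> Wty A0 B0 :=
  match w with sup _ f => f end.

Inductive DW (I : Type) (X : I -> Type) (Y : forall i, X i -> Type)
    (d : forall i (x : X i), Y i x -> I) : I -> Type :=
  dsup : forall (i : I) (x : X i), (forall y : Y i x, DW I X Y d (d i x y)) -> DW I X Y d i.
Arguments dsup {I X Y d} i x f.

Definition dnode {I X Y d} {i : I} (p : @DW I X Y d i) : X i :=
  match p with dsup _ x _ => x end.
Definition dbranch {I X Y d} {i : I} (p : @DW I X Y d i) :
  forall y : Y i (dnode p), DW I X Y d (d i (dnode p) y) :=
  match p with dsup _ _ f => f end.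

Section WSetoid.
Context {A : Setoid} (B : SetoidFamily A).

Definition W0 : Type := @Wty (car A) (fun a => car (fam B a)).

Definition IB : Type := (W0 * W0)%type.
Definition XB (i : IB) : Type := eqv (wnode (fst i)) (wnode (snd i)).
Definition YB (i : IB) (al : XB i) : Type :=
  {b : fam B (wnode (fst i)) & {b' : fam B (wnode (snd i)) & treqv B al b b'}}.
Definition dB (i : IB) (al : XB i) (y : YB i al) : IB :=
  (wbranch (fst i) (projT1 y), wbranch (snd i) (projT1 (projT2 y))).

Definition approxB (w w' : W0) : Type := @DW IB XB YB dB (w, w').

Lemma approxB_sym : forall w w', approxB w w' -> approxB w' w.
Proof.
  assert (H : forall i, @DW IB XB YB dB i -> approxB (snd i) (fst i)).
  { intros i p; induction p as [[w w'] al f IH].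
    apply (dsup (w', w) (ssym al : XB (w', w))).
    intros [b' [b be]]; simpl in *.
    assert (P : treqv B al b b').
    { unfold treqv in *.
      eapply strans; [| apply tr_inv with (al := al)].
      apply (ext (tr B al)); exact (ssym be). }
    exact (IH (existT _ b (existT _ b' P))). }
  intros w w' p; exact (H (w, w') p).
Qed.

Lemma approxB_trans : forall w w' w'', approxB w w' -> approxB w' w'' -> approxB w w''.
Proof.
  assert (H : forall i, @DW IB XB YB dB i ->
            forall w'', approxB (snd i) w'' -> approxB (fst i) w'').
  { intros i p; induction p as [[w w'] al f IH]; simpl.
    intros w'' q.
    apply (dsup (w, w'') (strans al (dnode q) : XB (w, w''))).
    intros [b [b'' ga]]; simpl in *.
    apply (IH (existT _ b (existT _ (tr B al b) (srefl _)))).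
    simpl.
    assert (P : treqv B (dnode q) (tr B al b) b'').
    { unfold treqv in *.
      eapply strans; [apply ssym, tr_trans|]. exact ga. }
    exact (dbranch q (existT _ (tr B al b) (existT _ b'' P))). }
  intros w w' w'' p; exact (H (w, w') p w'').
Qed.

Definition WS : Setoid.
Proof.
  refine (@mkSetoid {w : W0 & approxB w w}
            (fun p q => approxB (projT1 p) (projT1 q)) _ _ _).
  - intros [w r]; exact r.
  - intros p q; apply approxB_sym.
  - intros p q r; apply approxB_trans.
Defined.

Definition nW0 (w : WS) : A := wnode (projT1 w).
Definition nstar {w w' : WS} (ga : eqv w w') : eqv (nW0 w) (nW0 w') := dnode ga.
Definition nW : ExtFun WS A := mkExtFun nW0 (fun w w' ga => nstar ga).

Lemma bW_refl (w : WS) (b b' : fam B (nW0 w)) (e : eqv b b') :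
  approxB (wbranch (projT1 w) b) (wbranch (projT1 w) b').
Proof.
  destruct w as [w r]; simpl in *.
  assert (P : treqv B (dnode r) b b').
  { unfold treqv.
    eapply strans; [apply tr_irr with (al' := srefl _)|].
    eapply strans; [apply tr_refl|]. exact e. }
  exact (dbranch r (existT _ b (existT _ b' P))).
Qed.

Definition bW0 (w : WS) (b : fam B (nW0 w)) : WS :=
  existT (fun v : W0 => approxB v v) (wbranch (projT1 w) b) (bW_refl w b b (srefl b)).

Definition bW (w : WS) : ExtFun (fam B (nW0 w)) WS :=
  mkExtFun (bW0 w) (fun b b' e => bW_refl w b b' e).

Definition ImS (w : WS) : Setoid.
Proof.
  refine (@mkSetoid (fam B (nW0 w)) (fun b b' => eqv (bW w b) (bW w b')) _ _ _).
  - intro x; apply srefl.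
  - intros x y; apply ssym.
  - intros x y z; apply strans.
Defined.

Lemma ImS_tr_ext {w w' : WS} (ga : eqv w w') (s s' : ImS w) :
  eqv s s' -> eqv (s := ImS w') (tr B (nstar ga) s) (tr B (nstar ga) s').
Proof.
  intro e.
  assert (Hs : forall t : fam B (nW0 w),
             eqv (s := WS) (bW w t) (bW w' (tr B (nstar ga) t))).
  { intro t. destruct w as [w0 r], w' as [w0' r']; simpl in *.
    exact (dbranch ga (existT _ t (existT _ (tr B (dnode ga) t) (srefl _)))). }
  exact (strans (ssym (Hs s)) (strans (e : eqv (s := WS) (bW w s) (bW w s')) (Hs s'))).
Qed.

Definition ImS_tr {w w' : WS} (ga : eqv w w') : ExtFun (ImS w) (ImS w') :=
  mkExtFun (fun s : ImS w => (tr B (nstar ga) s : ImS w')) (ImS_tr_ext ga).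

Definition e_ (w : WS) : ExtFun (fam B (nW0 w)) (ImS w) :=
  mkExtFun (fun b : fam B (nW0 w) => (b : ImS w))
    (fun (b b' : fam B (nW0 w)) (e : eqv b b') => ext (bW w) e).

Section Rec.
Context (C : Setoid) (aC : ExtFun (PB B C) C).

Definition Coherent (w : WS) (F : forall s : ImS w, ExtFun (ImS (bW w s)) C) : Type :=
  forall (s s' : ImS w) (sg : eqv s s'), FunEqv (F s) (comp (F s') (ImS_tr sg)).

Definition CohMaps (w : WS) : Setoid.
Proof.
  refine (@mkSetoid {F : forall s : ImS w, ExtFun (ImS (bW w s)) C & Coherent w F}
            (fun F G => forall s, FunEqv (projT1 F s) (projT1 G s)) _ _ _).
  - intros F s x; apply srefl.
  - intros F G H s x; apply ssym, H.
  - intros F G K H1 H2 s x; exact (strans (H1 s x) (H2 s x)).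
Defined.

Definition recst0 (w : WS) (F : CohMaps w) (s : ImS w) : C :=
  aC (existT _ (nW0 (bW w s)) (comp (projT1 F s) (e_ (bW w s))) : PB B C).

Lemma recst_ext (w : WS) (F : CohMaps w) (s s' : ImS w) :
  eqv s s' -> eqv (recst0 w F s) (recst0 w F s').
Proof.
  intro sg. unfold recst0. apply (ext aC).
  exists (nstar sg). intro b. simpl.
  exact (projT2 F s s' sg b).
Qed.

Definition recst (w : WS) (F : CohMaps w) : ExtFun (ImS w) C :=
  mkExtFun (recst0 w F) (recst_ext w F).

Definition I' : Type := {w : WS & ExtFun (ImS w) C}.
Definition X' (i : I') : Type :=
  {F : CohMaps (projT1 i) & FunEqv (projT2 i) (recst (projT1 i) F)}.
Definition Y' (i : I') (x : X' i) : Type := car (ImS (projT1 i)).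
Definition d' (i : I') (x : X' i) (s : Y' i x) : I' :=
  existT _ (bW (projT1 i) s) (projT1 (projT1 x) s).

Definition RecDef (w : WS) (k : ExtFun (ImS w) C) : Type :=
  @DW I' X' Y' d' (existT _ w k).

End Rec.
End WSetoid.

(* Main.v *)
Require Import Defs.

Section Pf.
Context {A : Setoid} (B : SetoidFamily A) (C : Setoid) (aC : ExtFun (PB B C) C).


Lemma uniq_aux : forall (i : I' B C) (p : @DW (I' B C) (X' B C aC) (Y' B C aC) (d' B C aC) i)
  (i' : I' B C) (p' : @DW (I' B C) (X' B C aC) (Y' B C aC) (d' B C aC) i')
  (ga : eqv (projT1 i) (projT1 i')), FunEqv (projT2 i) (comp (projT2 i') (ImS_tr B ga)).
Proof.
  intros i p; induction p as [[w k] [F HF] f IH]; simpl in *.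
  intros i' p' ga t.
  destruct p' as [[w' k'] [F' HF'] f']; simpl in *.
  eapply strans; [apply HF|].
  eapply strans; [|apply ssym, HF'].
  simpl. unfold recst0. apply (ext aC).
  assert (Hs : eqv (s := WS B) (bW B w t) (bW B w' (tr B (nstar B ga) t))).
  { destruct w as [w0 r], w' as [w0' r']; simpl in *.
    exact (dbranch ga (existT _ t (existT _ (tr B (dnode ga) t) (srefl _)))). }
  exists (nstar B Hs). intro b. simpl.
  exact (IH t _ (f' (tr B (nstar B ga) t)) Hs b).
Qed.

Lemma main : forall (w0 : W0 B) (r : approxB B w0 w0),
  let w := existT (fun v : W0 B => approxB B v v) w0 r : WS B in { k : ExtFun (ImS B w) C & RecDef B C aC w k }.
Proof.
  intro w0; induction w0 as [a f IH]; intro r; simpl.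
  set (w := existT (fun v : W0 B => approxB B v v) (sup a f) r : WS B).
  set (G := fun s : ImS B w => IH s (bW_refl B w s s (srefl (s := fam B (nW0 B w)) s))).
  assert (coh : Coherent B C w (fun s => projT1 (G s))).
  { intros s s' sg.
    exact (uniq_aux _ (projT2 (G s)) _ (projT2 (G s')) sg). }
  set (FF := existT _ (fun s => projT1 (G s)) coh : CohMaps B C w).
  exists (recst B C aC w FF).
  refine (dsup (existT _ w (recst B C aC w FF)) (existT _ FF (fun x => srefl _)) _).
  intro s. exact (projT2 (G s)).
Defined.

End Pf.

Theorem proposition3p13 (A : Setoid) (B : SetoidFamily A) (C : Setoid)
  (aC : ExtFun (PB B C) C) (w : WS B) :
  { recImS : ExtFun (ImS B w) C & RecDef B C aC w recImS }.
Proof.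
  destruct w as [w0 r]. exact (main B C aC w0 r).
Qed.
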